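(* Let $\Psi$ be a well-formed declarative context and $\tau$ a monotype. (i) If $\Psi\vdash A\le\tau$ then $\tau$ does not occur inside an arrow in $A$. (ii) If $\Psi\vdash\tau\le B$ then $\tau$ does not occur inside an arrow in $B$.
   Context: Types $A,B ::= 1\mid\alpha\mid\forall\alpha.A\mid A\to B$; monotypes $\tau ::= 1\mid\alpha\mid\tau\to\tau'$. Declarative contexts $\Psi ::= \cdot\mid\Psi,\alpha\mid\Psi,x:A$. Well-formedness $\Psi\vdash A$: all free type variables of $A$ are declared in $\Psi$. Declarative subtyping $\Psi\vdash A\le B$ is the least relation with: $\alpha\in\Psi\Rightarrow\Psi\vdash\alpha\le\alpha$; $\Psi\vdash1\le1$; ($\Psi\vdash B_1\le A_1$, $\Psi\vdash A_2\le B_2$) $\Rightarrow\Psi\vdash A_1\to A_2\le B_1\to B_2$; ($\Psi\vdash\sigma$ monotype, $\Psi\vdash[\sigma/\alpha]A\le B$) $\Rightarrow\Psi\vdash\forall\alpha.A\le B$; ($\Psi,\beta\vdash A\le B$) $\Rightarrow\Psi\vdash A\le\forall\beta.B$. $A$ is a subterm of $B$ if $A$ occurs syntactically in $B$ (including $A=B$). $A$ occurs inside an arrow in $B$ iff there exist $B_1,B_2$ such that $B_1\to B_2$ is a subterm of $B$ and $A$ is a subterm of $B_1$ or of $B_2$. *)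

(* Defs.v *)
From Stdlib Require Import List Arith.
Import ListNotations.

Inductive typ : Type :=
| TUnit : typ
| TVar : nat -> typ
| TForall : nat -> typ -> typ
| TArr : typ -> typ -> typ.

Fixpoint is_mono (A : typ) : Prop :=
  match A with
  | TUnit => True
  | TVar _ => True
  | TForall _ _ => False
  | TArr A1 A2 => is_mono A1 /\ is_mono A2
  end.

Fixpoint ftv (A : typ) : list nat :=
  match A with
  | TUnit => []
  | TVar a => [a]
  | TForall b B => filter (fun x => negb (Nat.eqb x b)) (ftv B)
  | TArr A1 A2 => ftv A1 ++ ftv A2
  end.

Definition fresh (l : list nat) : nat := S (list_max l).

(* capture-avoiding simultaneous substitution; the bound variable is
   renamed (to a fresh name) only when it would capture *)
Fixpoint ssubst (env : nat -> typ) (A : typ) : typ :=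
  match A with
  | TUnit => TUnit
  | TVar a => env a
  | TForall b B =>
      let avoid := flat_map (fun x => if Nat.eqb x b then [] else ftv (env x)) (ftv B) in
      let z := if existsb (Nat.eqb b) avoid then fresh avoid else b in
      TForall z (ssubst (fun x => if Nat.eqb x b then TVar z else env x) B)
  | TArr A1 A2 => TArr (ssubst env A1) (ssubst env A2)
  end.

Definition subst (s : typ) (a : nat) (A : typ) : typ :=
  ssubst (fun x => if Nat.eqb x a then s else TVar x) A.

(* declarative contexts; the head of the list is the most recent entry *)
Inductive entry : Type :=
| ETVar : nat -> entry
| EVar : nat -> typ -> entry.

Definition ctx := list entry.

Fixpoint ctx_tvars (G : ctx) : list nat :=
  match G with
  | [] => []
  | ETVar a :: G' => a :: ctx_tvars G'
  | EVar _ _ :: G' => ctx_tvars G'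
  end.

Fixpoint ctx_vars (G : ctx) : list nat :=
  match G with
  | [] => []
  | ETVar _ :: G' => ctx_vars G'
  | EVar x _ :: G' => x :: ctx_vars G'
  end.

Definition wf_typ (G : ctx) (A : typ) : Prop :=
  forall a, In a (ftv A) -> In a (ctx_tvars G).

Inductive wf_ctx : ctx -> Prop :=
| wf_nil : wf_ctx []
| wf_tvar : forall G a, wf_ctx G -> ~ In a (ctx_tvars G) -> wf_ctx (ETVar a :: G)
| wf_var : forall G x A, wf_ctx G -> ~ In x (ctx_vars G) -> wf_typ G A ->
    wf_ctx (EVar x A :: G).

Inductive sub : ctx -> typ -> typ -> Prop :=
| sub_var : forall G a, In a (ctx_tvars G) -> sub G (TVar a) (TVar a)
| sub_unit : forall G, sub G TUnit TUnit
| sub_arr : forall G A1 A2 B1 B2,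
    sub G B1 A1 -> sub G A2 B2 -> sub G (TArr A1 A2) (TArr B1 B2)
| sub_forallL : forall G a A B s,
    wf_typ G s -> is_mono s -> sub G (subst s a A) B -> sub G (TForall a A) B
| sub_forallR : forall G A b B,
    sub (ETVar b :: G) A B -> sub G A (TForall b B).

Inductive subterm (A : typ) : typ -> Prop :=
| st_refl : subterm A A
| st_forall : forall b B, subterm A B -> subterm A (TForall b B)
| st_arrL : forall B1 B2, subterm A B1 -> subterm A (TArr B1 B2)
| st_arrR : forall B1 B2, subterm A B2 -> subterm A (TArr B1 B2).

Definition occurs_inside_arrow (A B : typ) : Prop :=
  exists B1 B2, subterm (TArr B1 B2) B /\ (subterm A B1 \/ subterm A B2).

(* Main.v *)
Require Import Defs.
From Stdlib Require Import List Arith Lia.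

Fixpoint fsize (A : typ) : nat :=
  match A with
  | TUnit => 1
  | TVar _ => 1
  | TForall _ B => fsize B
  | TArr A1 A2 => fsize A1 + fsize A2
  end.

Lemma fsize_pos : forall A, 1 <= fsize A.
Proof. induction A; simpl; lia. Qed.

Lemma fsize_ssubst : forall A env, fsize A <= fsize (ssubst env A).
Proof.
  induction A; intros env; simpl; auto.
  - apply fsize_pos.
  - specialize (IHA1 env); specialize (IHA2 env); lia.
Qed.

Lemma subterm_fsize : forall S T, subterm S T -> fsize S <= fsize T.
Proof. intros S T H; induction H; simpl; lia. Qed.

Lemma ssubst_subterm : forall S A, subterm S A -> forall env,
  exists env', subterm (ssubst env' S) (ssubst env A).
Proof.
  intros S A H; induction H; intros env.
  - exists env; constructor.
  - simpl. edestruct IHsubterm as [e He]. exists e. apply st_forall. exact He.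
  - simpl. destruct (IHsubterm env) as [e He]. exists e. apply st_arrL. exact He.
  - simpl. destruct (IHsubterm env) as [e He]. exists e. apply st_arrR. exact He.
Qed.

Lemma ssubst_oia : forall S A env, occurs_inside_arrow S A ->
  exists env', occurs_inside_arrow (ssubst env' S) (ssubst env A).
Proof.
  intros S A env [B1 [B2 [H1 H2]]].
  destruct (ssubst_subterm _ _ H1 env) as [e1 He1]. simpl in He1.
  destruct H2 as [H2|H2]; destruct (ssubst_subterm _ _ H2 e1) as [e2 He2];
    exists e2; exists (ssubst e1 B1), (ssubst e1 B2); auto.
Qed.

Lemma oia_fsize : forall S T, occurs_inside_arrow S T -> fsize S < fsize T.
Proof.
  intros S T [B1 [B2 [H1 H2]]].
  apply subterm_fsize in H1. simpl in H1.
  pose proof (fsize_pos B1); pose proof (fsize_pos B2).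
  destruct H2 as [H2|H2]; apply subterm_fsize in H2; lia.
Qed.

Definition P (A B : typ) : Prop := forall S,
  (subterm S A -> exists S', subterm S' B /\ fsize S <= fsize S') /\
  (occurs_inside_arrow S A -> exists S', occurs_inside_arrow S' B /\ fsize S <= fsize S').

Lemma oia_arr : forall S A1 A2, occurs_inside_arrow S (TArr A1 A2) ->
  subterm S A1 \/ subterm S A2 \/ occurs_inside_arrow S A1 \/ occurs_inside_arrow S A2.
Proof.
  intros S A1 A2 [B1 [B2 [H1 H2]]].
  inversion H1; subst.
  - destruct H2; auto.
  - right; right; left. exists B1, B2; auto.
  - right; right; right. exists B1, B2; auto.
Qed.

Lemma oia_forall : forall S a X, occurs_inside_arrow S (TForall a X) -> occurs_inside_arrow S X.
Proof.
  intros S a X [B1 [B2 [H1 H2]]]. inversion H1; subst. exists B1, B2; auto.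
Qed.

Lemma P_arr : forall A1 A2 B1 B2, P A1 B1 -> P A2 B2 -> P (TArr A1 A2) (TArr B1 B2).
Proof.
  intros A1 A2 B1 B2 H1 H2 S. split.
  - intros Hs. inversion Hs; subst.
    + destruct (proj1 (H1 A1) (st_refl _)) as [S1 [Hs1 Hf1]].
      destruct (proj1 (H2 A2) (st_refl _)) as [S2 [Hs2 Hf2]].
      exists (TArr B1 B2). split; [constructor|].
      apply subterm_fsize in Hs1; apply subterm_fsize in Hs2. simpl; lia.
    + destruct (proj1 (H1 S) H0) as [S1 [Hs1 Hf1]]. exists S1; split; auto. apply st_arrL; auto.
    + destruct (proj1 (H2 S) H0) as [S1 [Hs1 Hf1]]. exists S1; split; auto. apply st_arrR; auto.
  - intros Ho. destruct (oia_arr _ _ _ Ho) as [H|[H|[H|H]]].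
    + destruct (proj1 (H1 S) H) as [S1 [Hs1 Hf1]]. exists S1; split; auto.
      exists B1, B2; split; [constructor|auto].
    + destruct (proj1 (H2 S) H) as [S1 [Hs1 Hf1]]. exists S1; split; auto.
      exists B1, B2; split; [constructor|auto].
    + destruct (proj2 (H1 S) H) as [S1 [[C1 [C2 [Hc1 Hc2]]] Hf1]]. exists S1; split; auto.
      exists C1, C2; split; auto. apply st_arrL; auto.
    + destruct (proj2 (H2 S) H) as [S1 [[C1 [C2 [Hc1 Hc2]]] Hf1]]. exists S1; split; auto.
      exists C1, C2; split; auto. apply st_arrR; auto.
Qed.

Lemma P_forall_gen : forall a X Y B, fsize X <= fsize Y ->
  (forall S, subterm S X -> exists S', subterm S' Y /\ fsize S <= fsize S') ->
  (forall S, occurs_inside_arrow S X -> exists S', occurs_inside_arrow S' Y /\ fsize S <= fsize S') ->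
  P Y B -> P (TForall a X) B.
Proof.
  intros a X Y B Hf Hst Ho HP S. split.
  - intros Hs. inversion Hs; subst.
    + destruct (proj1 (HP Y) (st_refl _)) as [S1 [Hs1 Hf1]]. exists S1; split; auto. simpl; lia.
    + destruct (Hst S H0) as [S2 [Hs2 Hf2]].
      destruct (proj1 (HP S2) Hs2) as [S1 [Hs1 Hf1]]. exists S1; split; auto; lia.
  - intros Hoa. apply oia_forall in Hoa.
    destruct (Ho S Hoa) as [S2 [Hs2 Hf2]].
    destruct (proj2 (HP S2) Hs2) as [S1 [Hs1 Hf1]]. exists S1; split; auto; lia.
Qed.

Lemma P_forallR : forall b Y A, P Y A -> P (TForall b Y) A.
Proof.
  intros b Y A H. apply (P_forall_gen b Y Y A); auto.
  - intros S Hs; exists S; auto.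
  - intros S Hs; exists S; auto.
Qed.

Lemma P_refl : forall A, P A A.
Proof. intros A S; split; intros H; exists S; auto. Qed.

Lemma main_gen : forall G A B, sub G A B ->
  (is_mono B -> P A B) /\ (is_mono A -> P B A).
Proof.
  intros G A B H; induction H.
  - split; intros; apply P_refl.
  - split; intros; apply P_refl.
  - simpl. split; intros [Hm1 Hm2].
    + apply P_arr; [apply (proj2 IHsub1)|apply (proj1 IHsub2)]; auto.
    + apply P_arr; [apply (proj1 IHsub1)|apply (proj2 IHsub2)]; auto.
  - split; [|simpl; tauto]. intros Hm.
    apply (P_forall_gen a A (subst s a A) B).
    + apply fsize_ssubst.
    + intros S Hs. destruct (ssubst_subterm _ _ Hs (fun x => if Nat.eqb x a then s else TVar x)) as [e He].
      exists (ssubst e S); split; auto. apply fsize_ssubst.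
    + intros S Hs. destruct (ssubst_oia _ _ (fun x => if Nat.eqb x a then s else TVar x) Hs) as [e He].
      exists (ssubst e S); split; auto. apply fsize_ssubst.
    + apply (proj1 IHsub); auto.
  - split; [simpl; tauto|]. intros Hm. apply P_forallR. apply (proj2 IHsub); auto.
Qed.

Theorem mainTheorem14 (G : ctx) (tau : typ) :
  wf_ctx G -> is_mono tau ->
  (forall A : typ, sub G A tau -> ~ occurs_inside_arrow tau A) /\
  (forall B : typ, sub G tau B -> ~ occurs_inside_arrow tau B).
Proof.
  intros _ Hm. split.
  - intros A H Ho. destruct (proj2 (proj1 (main_gen _ _ _ H) Hm tau) Ho) as [S [HS Hf]].
    apply oia_fsize in HS. lia.
  - intros B H Ho. destruct (proj2 (proj2 (main_gen _ _ _ H) Hm tau) Ho) as [S [HS Hf]].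
    apply oia_fsize in HS. lia.
Qed.
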